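(* Let $\mathcal H_S$ and $\mathcal H_A$ be finite-dimensional Hilbert spaces, let $\rho_{SA}$ be a density matrix on $\mathcal H_S\otimes\mathcal H_A$, and let $\{|r_k\rangle\}$ be an orthonormal basis of $\mathcal H_S$. Suppose that for every orthonormal basis $\{|a\rangle\}$ of $\mathcal H_A$ and every outcome $a$ with $p_a>0$, the conditional state $\rho_{S|a}$ is diagonal in the basis $\{|r_k\rangle\}$. Then $$\rho_{SA}=\sum_k|r_k\rangle\langle r_k|\otimes C^A_k$$ for some positive semidefinite operators $C^A_k$ on $\mathcal H_A$.
   Context: For an orthonormal basis $\{|a\rangle\}$ of $\mathcal H_A$ with projectors $\Pi^A_a=|a\rangle\langle a|$: $p_a=\mathrm{Tr}[(I^S\otimes\Pi^A_a)\rho_{SA}]$ and, when $p_a>0$, $\rho_{S|a}=\mathrm{Tr}_A[(I^S\otimes\Pi^A_a)\rho_{SA}(I^S\otimes\Pi^A_a)]/p_a$. *)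

(* Defs.v *)
(* Complex scalars: an arbitrary numClosedFieldType C
   (e.g. algC, or complex R for a real closed / real field R). *)
From mathcomp Require Import all_boot all_order all_algebra.
From mathcomp Require Export mxtens.
Set Implicit Arguments. Unset Strict Implicit. Unset Printing Implicit Defensive.
Import Order.TTheory GRing.Theory Num.Theory.
Local Open Scope ring_scope.

Section QDefs.
Variable C : numClosedFieldType.

Definition adjmx {m n} (A : 'M[C]_(m, n)) : 'M[C]_(n, m) :=
  (map_mx (fun z : C => z^*) A)^T.

Definition psd {n} (A : 'M[C]_n) : Prop :=
  adjmx A = A /\ forall v : 'cV[C]_n, 0 <= (adjmx v *m A *m v) 0 0.

Definition density {n} (rho : 'M[C]_n) : Prop := psd rho /\ \tr rho = 1.

(* the columns of U form an orthonormal basis of C^n *)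
Definition unitary {n} (U : 'M[C]_n) : Prop := adjmx U *m U = 1%:M.

Definition projb {n} (U : 'M[C]_n) (a : 'I_n) : 'M[C]_n :=
  col a U *m adjmx (col a U).

(* partial trace over the second tensor factor (H_S ⊗ H_A -> H_S),
   compatible with the ordering of tensmx *)
Definition ptraceA {m n} (M : 'M[C]_(m * n)) : 'M[C]_m :=
  \matrix_(i, j) \sum_(b < n) M (mxtens_index (i, b)) (mxtens_index (j, b)).

Definition liftA m {n} (U : 'M[C]_n) (a : 'I_n) : 'M[C]_(m * n) :=
  tensmx (1%:M : 'M[C]_m) (projb U a).

Definition prob_a {m n} (rho : 'M[C]_(m * n)) (U : 'M[C]_n) (a : 'I_n) : C :=
  \tr (liftA m U a *m rho).

Definition cond_state {m n} (rho : 'M[C]_(m * n)) (U : 'M[C]_n) (a : 'I_n)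
  : 'M[C]_m :=
  (prob_a rho U a)^-1 *: ptraceA (liftA m U a *m rho *m liftA m U a).

Definition diag_in {m} (R : 'M[C]_m) (sigma : 'M[C]_m) : Prop :=
  is_diag_mx (adjmx R *m sigma *m R).

End QDefs.

(* Main.v *)
Require Import Defs.
From mathcomp Require Import all_boot all_order all_algebra.
From mathcomp Require Import mxtens.
From mathcomp Require Import ring.
Import Order.TTheory GRing.Theory Num.Theory.
Local Open Scope ring_scope.
Set Warnings "-notation-overridden,-ambiguous-paths".

Lemma adjmxE {C : numClosedFieldType} m n (A : 'M[C]_(m, n)) i j :
  adjmx A i j = (A j i)^*.
Proof. by rewrite /adjmx !mxE. Qed.

Lemma adjmxK {C : numClosedFieldType} m n (A : 'M[C]_(m, n)) :
  adjmx (adjmx A) = A.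
Proof. by apply/matrixP=> i j; rewrite !adjmxE conjCK. Qed.

Lemma adjmx_mul {C : numClosedFieldType} m n p (A : 'M[C]_(m, n)) (B : 'M[C]_(n, p)) :
  adjmx (A *m B) = adjmx B *m adjmx A.
Proof.
apply/matrixP=> i j; rewrite adjmxE !mxE rmorph_sum; apply: eq_bigr=> k _.
by rewrite rmorphM !adjmxE mulrC.
Qed.

Lemma adjmxD {C : numClosedFieldType} m n (A B : 'M[C]_(m, n)) :
  adjmx (A + B) = adjmx A + adjmx B.
Proof. by apply/matrixP=> i j; rewrite /adjmx !mxE rmorphD. Qed.

Lemma adjmxN {C : numClosedFieldType} m n (A : 'M[C]_(m, n)) :
  adjmx (- A) = - adjmx A.
Proof. by apply/matrixP=> i j; rewrite /adjmx !mxE rmorphN. Qed.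

Lemma adjmxZ {C : numClosedFieldType} m n (c : C) (A : 'M[C]_(m, n)) :
  adjmx (c *: A) = c^* *: adjmx A.
Proof. by apply/matrixP=> i j; rewrite /adjmx !mxE rmorphM. Qed.

Lemma adjmx_scalar {C : numClosedFieldType} n (c : C) :
  adjmx (c%:M : 'M[C]_n) = (c^*)%:M.
Proof.
by apply/matrixP=> i j; rewrite /adjmx !mxE eq_sym rmorphMn.
Qed.

Lemma adjmx_delta {C : numClosedFieldType} m n (i : 'I_m) (j : 'I_n) :
  adjmx (delta_mx i j : 'M[C]_(m, n)) = delta_mx j i.
Proof.
apply/matrixP=> a b; rewrite adjmxE !mxE.
by case: (b == i); case: (a == j); rewrite /= ?rmorph0 ?rmorph1.
Qed.

Definition qf {C : numClosedFieldType} {n} (A : 'M[C]_n) (v w : 'cV[C]_n) : C :=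
  (adjmx v *m A *m w) 0 0.

Lemma qfDl {C : numClosedFieldType} n (A : 'M[C]_n) v1 v2 w :
  qf A (v1 + v2) w = qf A v1 w + qf A v2 w.
Proof. by rewrite /qf adjmxD !mulmxDl mxE. Qed.

Lemma qfDr {C : numClosedFieldType} n (A : 'M[C]_n) v w1 w2 :
  qf A v (w1 + w2) = qf A v w1 + qf A v w2.
Proof. by rewrite /qf !mulmxDr mxE. Qed.

Lemma qfZl {C : numClosedFieldType} n (A : 'M[C]_n) c v w :
  qf A (c *: v) w = c^* * qf A v w.
Proof. by rewrite /qf adjmxZ -!scalemxAl mxE. Qed.

Lemma qfZr {C : numClosedFieldType} n (A : 'M[C]_n) c v w :
  qf A v (c *: w) = c * qf A v w.
Proof. by rewrite /qf -!scalemxAr mxE. Qed.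

Lemma qf_delta {C : numClosedFieldType} n (A : 'M[C]_n) i j :
  qf A (delta_mx i 0) (delta_mx j 0) = A i j.
Proof.
rewrite /qf adjmx_delta -rowE -colE !mxE.
by [].
Qed.

Lemma entry_delta {R : pzSemiRingType} p q (M : 'M[R]_(p, q)) k l :
  M k l = ((delta_mx 0 k : 'M_(1, p)) *m M *m (delta_mx l 0 : 'M_(q, 1))) 0 0.
Proof. by rewrite -rowE -colE !mxE. Qed.

Lemma entry_qf {C : numClosedFieldType} p q (A : 'M[C]_p) (X Y : 'M[C]_(p, q)) k l :
  (adjmx X *m A *m Y) k l = qf A (col k X) (col l Y).
Proof.
rewrite entry_delta /qf !colE adjmx_mul adjmx_delta !mulmxA.
by [].
Qed.

Lemma psd_congr {C : numClosedFieldType} p q (A : 'M[C]_p) (X : 'M[C]_(p, q)) :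
  psd A -> psd (adjmx X *m A *m X).
Proof.
case=> hA pA; split.
  by rewrite !adjmx_mul adjmxK hA mulmxA.
move=> v; have := pA (X *m v).
by rewrite adjmx_mul !mulmxA.
Qed.
Lemma sum_delta_l {R : pzSemiRingType} n (x : 'I_n) (F : 'I_n -> R) :
  \sum_i ((x == i)%:R * F i) = F x.
Proof.
rewrite (bigD1 x) //= eqxx mul1r big1 ?addr0 // => i /negbTE.
by rewrite eq_sym => ->; rewrite mul0r.
Qed.

Lemma sum_delta_r {R : pzSemiRingType} n (x : 'I_n) (F : 'I_n -> R) :
  \sum_i (F i * (i == x)%:R) = F x.
Proof.
rewrite (bigD1 x) //= eqxx mulr1 big1 ?addr0 // => i /negbTE ->.
by rewrite mulr0.
Qed.

Definition Vm {C : numClosedFieldType} {m n} (u : 'cV[C]_n) : 'M[C]_(m * n, m) :=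
  \matrix_(I, i) (((mxtens_unindex I).1 == i)%:R * u (mxtens_unindex I).2 0).

Definition Wm {C : numClosedFieldType} {m n} (R : 'M[C]_m) (k : 'I_m) : 'M[C]_(m * n, n) :=
  \matrix_(I, b) (R (mxtens_unindex I).1 k * ((mxtens_unindex I).2 == b)%:R).

Lemma liftA_V {C : numClosedFieldType} m n (U : 'M[C]_n) a :
  liftA m U a = Vm (col a U) *m adjmx (Vm (col a U)).
Proof.
apply/matrixP=> I J; rewrite /liftA /projb /tensmx /Vm !mxE big_ord1.
under [RHS]eq_bigr => i _ do rewrite adjmxE !mxE rmorphM rmorph_nat mulrACA.
rewrite -big_distrl sum_delta_l.
by rewrite adjmxE !mxE eq_sym.
Qed.

Lemma prob_V {C : numClosedFieldType} m n (rho : 'M[C]_(m * n)) (U : 'M[C]_n) a :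
  prob_a rho U a = \tr (adjmx (Vm (col a U)) *m rho *m Vm (col a U)).
Proof. by rewrite /prob_a liftA_V -(mulmxA (Vm _)) (mxtrace_mulC (Vm _)). Qed.

Lemma VXV_E {C : numClosedFieldType} m n (u : 'cV[C]_n) (X : 'M[C]_m) I J :
  (Vm u *m X *m adjmx (Vm u)) I J =
  u (mxtens_unindex I).2 0 * X (mxtens_unindex I).1 (mxtens_unindex J).1
    * (u (mxtens_unindex J).2 0)^*.
Proof.
rewrite mxE /Vm.
under eq_bigr => j _ do rewrite adjmxE !mxE rmorphM rmorph_nat.
under eq_bigr => j _ do under eq_bigr => k _ do rewrite mxE -mulrA.
under eq_bigr => j _ do rewrite sum_delta_l mulrCA.
rewrite sum_delta_l.
by [].
Qed.

Lemma ptrace_VXV {C : numClosedFieldType} m n (u : 'cV[C]_n) (X : 'M[C]_m) :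
  adjmx u *m u = 1%:M -> ptraceA (Vm u *m X *m adjmx (Vm u)) = X.
Proof.
move=> hu; have hs : \sum_b u b 0 * (u b 0)^* = 1.
  have := congr1 (fun M : 'M_1 => M 0 0) hu; rewrite /= !mxE eqxx mulr1n => <-.
  by apply: eq_bigr => b _; rewrite adjmxE mulrC.
apply/matrixP=> i j; rewrite /ptraceA mxE.
under eq_bigr => b _ do rewrite VXV_E !mxtens_indexK /= mulrAC.
rewrite -big_distrl hs.
exact: mul1r.
Qed.

Lemma unit_col {C : numClosedFieldType} n (U : 'M[C]_n) a :
  unitary U -> adjmx (col a U) *m col a U = 1%:M.
Proof.
move=> hU; apply/matrixP=> i j; rewrite !ord1.
have := congr1 (fun M : 'M_n => M a a) hU; rewrite /= !mxE eqxx => <-.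
by apply: eq_bigr => b _; rewrite !adjmxE !mxE.
Qed.

Lemma ptrace_cond {C : numClosedFieldType} m n (rho : 'M[C]_(m * n)) (U : 'M[C]_n) a :
  unitary U ->
  ptraceA (liftA m U a *m rho *m liftA m U a) =
  adjmx (Vm (col a U)) *m rho *m Vm (col a U).
Proof.
move=> hU; rewrite liftA_V.
set V := Vm _.
have -> : V *m adjmx V *m rho *m (V *m adjmx V) =
          V *m (adjmx V *m rho *m V) *m adjmx V by rewrite !mulmxA.
by apply: ptrace_VXV; apply: unit_col.
Qed.

Lemma colVR {C : numClosedFieldType} m n (u : 'cV[C]_n) (R : 'M[C]_m) k :
  col k (Vm u *m R) = Wm R k *m u.
Proof.
apply/matrixP=> I z; rewrite !mxE /Vm /Wm.
under eq_bigr => i _ do rewrite mxE mulrAC.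
rewrite -big_distrl sum_delta_l.
under [RHS]eq_bigr => b _ do rewrite mxE -mulrA.
by rewrite -big_distrr sum_delta_l [z]ord1.
Qed.

Lemma sumWW {C : numClosedFieldType} m n (R : 'M[C]_m) :
  R *m adjmx R = 1%:M -> \sum_k Wm R k *m adjmx (Wm R k) = 1%:M :> 'M[C]_(m * n).
Proof.
move=> hR; apply/matrixP=> I J; rewrite summxE /Wm.
under eq_bigr => k _ do (rewrite mxE; under eq_bigr => b _ do
  rewrite adjmxE !mxE rmorphM rmorph_nat mulrACA).
under eq_bigr => k _ do rewrite -big_distrr sum_delta_l.
rewrite -big_distrl.
have -> : \sum_k R (mxtens_unindex I).1 k * (R (mxtens_unindex J).1 k)^* =
   (R *m adjmx R) (mxtens_unindex I).1 (mxtens_unindex J).1.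
  by rewrite mxE; apply: eq_bigr => k _; rewrite adjmxE.
rewrite hR !mxE.
have -> : (I == J) = (mxtens_unindex (m:=m) (n:=n) I == mxtens_unindex J).
  by rewrite (can_eq (@mxtens_unindexK m n)).
case: (mxtens_unindex I) => a b; case: (mxtens_unindex J) => c d /=.
rewrite xpair_eqE (eq_sym d b).
by case: (a == c); case: (b == d); rewrite /= ?mul1r ?mul0r.
Qed.

Lemma WBW {C : numClosedFieldType} m n (R : 'M[C]_m) k (B : 'M[C]_n) :
  Wm R k *m B *m adjmx (Wm R k) = tensmx (projb R k) B.
Proof.
apply/matrixP=> I J; rewrite /tensmx /projb /Wm !mxE big_ord1 !mxE.
under eq_bigr => b _ do rewrite !mxE rmorphM rmorph_nat.
under eq_bigr => b _ do (under eq_bigr => c _ do rewrite mxE -mulrA).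
under eq_bigr => b _ do rewrite -big_distrr sum_delta_l mulrA eq_sym.
by rewrite sum_delta_r mulrAC.
Qed.

Lemma qf_mul {C : numClosedFieldType} p q (A : 'M[C]_p) (X Y : 'M[C]_(p, q)) v w :
  qf A (X *m v) (Y *m w) = qf (adjmx X *m A *m Y) v w.
Proof. by rewrite /qf adjmx_mul !mulmxA. Qed.

Lemma qf_expand {C : numClosedFieldType} n (A : 'M[C]_n) k l (t : C) :
  qf A (delta_mx k 0 + t *: delta_mx l 0) (delta_mx k 0 + t *: delta_mx l 0) =
  A k k + t * A k l + t^* * A l k + t^* * (t * A l l).
Proof.
by rewrite !qfDl !qfDr !qfZl !qfZr !qf_delta !addrA.
Qed.

Lemma psd_diag_ge0 {C : numClosedFieldType} n (M : 'M[C]_n) k :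
  psd M -> 0 <= M k k.
Proof. by case=> _ /(_ (delta_mx k 0)); rewrite -/(qf M _ _) qf_delta. Qed.

Lemma psd_herm {C : numClosedFieldType} n (M : 'M[C]_n) k l :
  psd M -> M l k = (M k l)^*.
Proof. by case=> hM _; rewrite -{1}hM adjmxE. Qed.

Lemma psd_tr0 {C : numClosedFieldType} n (M : 'M[C]_n) :
  psd M -> \tr M = 0 -> M = 0.
Proof.
move=> hM htr.
have hd : forall k, M k k = 0.
  move=> k; apply: (psumr_eq0P _ htr) => // i _; exact: psd_diag_ge0.
apply/matrixP=> k l; rewrite mxE.
set x := M k l.
have := (proj2 hM) (delta_mx k 0 + (- x^*) *: delta_mx l 0).
rewrite -/(qf M _ _) qf_expand !hd (@psd_herm _ _ M k l hM) -/x rmorphN /= conjCK.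
rewrite !mulr0 !addr0 add0r !mulNr -opprD oppr_ge0 => h.
have h0 : 0 <= x * x^* by exact: mul_conjC_ge0.
have hx : x * x^* = 0.
  apply/eqP; rewrite eq_le h0 andbT.
  apply: le_trans h; rewrite [x^* * x]mulrC lerDl //.
by apply/eqP; rewrite -mul_conjC_eq0 hx.
Qed.

Lemma scal1 {C : numClosedFieldType} (A : 'M[C]_1) : A = (A 0 0)%:M.
Proof. by apply/matrixP=> i j; rewrite !ord1 !mxE eqxx mulr1n. Qed.

Lemma householder {C : numClosedFieldType} n (v : 'cV[C]_n) (x : 'I_n) :
  adjmx v *m v = 1%:M -> (v x 0)^* = v x 0 -> v x 0 != 1 ->
  exists U : 'M[C]_n, unitary U /\ col x U = v.
Proof.
move=> hv hc hc1.
set e : 'cV[C]_n := delta_mx x 0.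
set c := v x 0.
set w := e - v.
have hc0 : 1 - c != 0 by rewrite subr_eq0 eq_sym.
set b := (1 - c)^-1.
have hb : b * (1 - c) = 1 by rewrite mulVf.
have hbc : b^* = b by rewrite /b fmorphV /= rmorphB /= rmorph1 hc.
have h1 : adjmx e *m e = 1%:M.
  by rewrite /e adjmx_delta mul_delta_mx; apply/matrixP=> i j; rewrite !ord1 !mxE.
have h2 : adjmx e *m v = c%:M.
  by rewrite [LHS]scal1 /e adjmx_delta -rowE !mxE.
have h3 : adjmx v *m e = c%:M.
  by rewrite -[e]adjmxK -adjmx_mul h2 adjmx_scalar hc.
have hw : adjmx w *m w = ((1 - c) *+ 2)%:M.
  rewrite /w adjmxD adjmxN mulmxDl !mulmxDr !mulmxN !mulNmx opprK h1 h2 h3 hv.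
  apply/matrixP=> i j; rewrite !ord1 !mxE eqxx /= !mulr1n.
  ring.
have hwe : adjmx w *m e = (1 - c)%:M.
  rewrite /w adjmxD adjmxN mulmxDl h1 mulNmx h3.
  by apply/matrixP=> i j; rewrite !ord1 !mxE eqxx /=.
set P := w *m adjmx w.
have hP : adjmx P = P by rewrite /P adjmx_mul adjmxK.
have hPP : P *m P = ((1 - c) *+ 2) *: P.
  by rewrite /P mulmxA -(mulmxA w) hw mul_mx_scalar -scalemxAl.
exists (1%:M - b *: P); split.
  rewrite /unitary adjmxD adjmxN adjmxZ hP adjmx_scalar rmorph1 hbc.
  rewrite mulmxBl !mulmxBr mul1mx mulmx1 -!scalemxAl -!scalemxAr hPP scalerA mul1mx scalerA.
  have -> : b * b * ((1 - c) *+ 2) = b *+ 2.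
    by rewrite mulrnAr -mulrA (_ : b * (1 - c) = 1) ?mulr1 //; exact: hb.
  by rewrite -scalerMnl mulr2n opprB addrK subrK.
rewrite colE mulmxBl mul1mx -scalemxAl -mulmxA hwe mul_mx_scalar scalerA.
have -> : b * (1 - c) = 1 by exact: hb.
by rewrite scale1r /w opprB addrC subrK.
Qed.

Lemma unitary1 {C : numClosedFieldType} n : unitary (1%:M : 'M[C]_n).
Proof. by rewrite /unitary adjmx_scalar rmorph1 mul1mx. Qed.

Lemma pol_step {C : numClosedFieldType} n (N : 'M[C]_n) (x y : 'I_n) (c : C) :
  (forall (U : 'M[C]_n) a, unitary U -> qf N (col a U) (col a U) = 0) ->
  (forall a, N a a = 0) -> x != y -> c^* * c = 1 ->
  c * N x y + c^* * N y x = 0.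
Proof.
move=> H hd hxy hc.
set s : C := sqrtC (2^-1).
have hs0 : 0 <= s by rewrite sqrtC_ge0 invr_ge0 ler0n.
have hsc : s^* = s by exact: geC0_conj.
have hs2 : s * s = 2^-1 by rewrite -expr2 sqrtCK.
have h20 : (2 : C) != 0 by rewrite pnatr_eq0.
set v : 'cV[C]_n := s *: (delta_mx x 0 + c *: delta_mx y 0).
have hv : adjmx v *m v = 1%:M.
  rewrite [LHS]scal1 -(mulmx1 (adjmx v)) -/(qf 1%:M v v) /v qfZl qfZr qf_expand.
  rewrite !mxE !eqxx (negbTE hxy) eq_sym (negbTE hxy) /= !mulr0 !addr0 mulr1 hc hsc.
  by rewrite mulrA hs2 -[1 + 1]/(2%:R) mulVf.
have hvx : v x 0 = s.
  by rewrite /v !mxE !eqxx (negbTE hxy) /= mulr0 addr0 mulr1.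
have hs1 : s != 1.
  apply/negP=> /eqP h1; move: hs2; rewrite h1 mulr1 => /esym/eqP.
  by rewrite invr_eq1 pnatr_eq1.
have hreal : (v x 0)^* = v x 0 by rewrite hvx.
have hne : v x 0 != 1 by rewrite hvx.
have [U [hU hcol]] := @householder _ n v x hv hreal hne.
have := H U x hU; rewrite hcol /v qfZl qfZr qf_expand !hd hsc mulrA hs2.
rewrite !mulr0 addr0 add0r => /eqP; rewrite mulf_eq0 invr_eq0 (negbTE h20) /=.
by move/eqP.
Qed.

Lemma polar {C : numClosedFieldType} n (N : 'M[C]_n) :
  (forall (U : 'M[C]_n) a, unitary U -> qf N (col a U) (col a U) = 0) -> N = 0.
Proof.
move=> H.
have hd : forall a, N a a = 0.
  by move=> a; have := H _ a (unitary1 n); rewrite colE mul1mx qf_delta.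
apply/matrixP=> x y; rewrite mxE.
have [->|hxy] := eqVneq x y; first exact: hd.
have c1 : (1 : C)^* * 1 = 1 by rewrite rmorph1 mulr1.
have h1 := @pol_step _ n N x y 1 H hd hxy c1.
have ci : ('i : C)^* * 'i = 1 by rewrite conjCi mulNr -expr2 sqrCi opprK.
have hi := @pol_step _ n N x y 'i H hd hxy ci.
rewrite rmorph1 !mul1r in h1.
have hyx : N y x = - N x y by apply/eqP; rewrite -addr_eq0 addrC h1.
move: hi; rewrite hyx conjCi mulrNN -mulr2n => /eqP.
rewrite mulrn_eq0 /= mulf_eq0 (negbTE (@neq0Ci C)) /=.
by move/eqP.
Qed.

Theorem lemma2 (C : numClosedFieldType) (m n : nat)
  (rho : 'M[C]_(m * n)) (R : 'M[C]_m) :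
  density rho ->
  unitary R ->
  (forall (U : 'M[C]_n), unitary U ->
     forall a : 'I_n, 0 < prob_a rho U a ->
       diag_in R (cond_state rho U a)) ->
  exists Ck : 'I_m -> 'M[C]_n,
    (forall k, psd (Ck k)) /\
    rho = \sum_(k < m) tensmx (projb R k) (Ck k).
Proof.
move=> [hrho _] hR H.
have hRR : R *m adjmx R = 1%:M by apply: mulmx1C.
pose B k l : 'M[C]_n := adjmx (Wm R k) *m rho *m Wm R l.
have hoff : forall k l, k != l -> B k l = 0.
  move=> k l hkl; apply: polar => U a hU.
  set u := col a U.
  set Q := adjmx (Vm u) *m rho *m Vm u.
  set M := adjmx R *m Q *m R.
  have hQpsd : psd Q by apply: psd_congr.
  have hMpsd : psd M by apply: psd_congr.
  have hMe : M k l = qf (B k l) u u.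
    have -> : M = adjmx (Vm u *m R) *m rho *m (Vm u *m R).
      by rewrite /M /Q !adjmx_mul !mulmxA.
    by rewrite entry_qf !colVR qf_mul.
  rewrite -hMe.
  have htr : prob_a rho U a = \tr M.
    rewrite prob_V -/u -/Q /M (mxtrace_mulC (adjmx R *m Q)) mulmxA hRR mul1mx.
    by [].
  have hcond : cond_state rho U a = (prob_a rho U a)^-1 *: Q.
    by rewrite /cond_state ptrace_cond.
  have hp0 : 0 <= prob_a rho U a.
    by rewrite htr /mxtrace; apply: sumr_ge0 => i _; apply: psd_diag_ge0.
  case: (boolP (0 < prob_a rho U a)) => hp.
    have := H U hU a hp; rewrite /diag_in hcond => /is_diag_mxP/(_ k l hkl).
    rewrite -scalemxAr -scalemxAl mxE -/M => /eqP.
    by rewrite mulf_eq0 invr_eq0 (negbTE (lt0r_neq0 hp)) /= => /eqP.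
  have hp1 : prob_a rho U a = 0.
    by move: hp0; rewrite le_eqVlt (negbTE hp) orbF => /eqP <-.
  by rewrite (@psd_tr0 _ _ M hMpsd) ?mxE // -htr.
exists (fun k => B k k); split.
  by move=> k; apply: psd_congr.
have e1 : rho = (\sum_k Wm R k *m adjmx (Wm R k)) *m rho *m
                (\sum_k Wm R k *m adjmx (Wm R k)).
  by rewrite sumWW // mul1mx mulmx1.
rewrite {1}e1 mulmx_suml mulmx_suml; apply: eq_bigr => k _.
rewrite mulmx_sumr (bigD1 k) //= big1 ?addr0.
  by rewrite -WBW /B !mulmxA.
move=> l hl.
transitivity (Wm R k *m B k l *m adjmx (Wm R l)); first by rewrite /B !mulmxA.
by rewrite hoff 1?eq_sym // mulmx0 mul0mx.
Qed.
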